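(* Let $\mathfrak{n}$ be the real $7$-dimensional Lie algebra with basis $e_1,\dots,e_7$ whose nonzero brackets (up to antisymmetry) are $[e_1,e_2]=e_4$, $[e_1,e_3]=e_5$, $[e_1,e_4]=e_6$, $[e_1,e_6]=e_7$, $[e_2,e_3]=e_6$, $[e_2,e_5]=e_7$, $[e_3,e_5]=e_7$. Then $\mathfrak{n}$ is not an Einstein nilradical.
   Context: A real nilpotent Lie algebra $\mathfrak{n}$ is called an Einstein nilradical if it admits an inner product such that the left-invariant Riemannian metric it defines on the simply connected nilpotent Lie group with Lie algebra $\mathfrak{n}$ is a nilsoliton, i.e. its Ricci operator satisfies $\mathrm{Ric}=c\,\mathrm{Id}+D$ for some $c\in\mathbb{R}$ and some derivation $D$ of $\mathfrak{n}$. Brackets of basis elements not listed are zero. *)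

(* Defs.v *)
From HB Require Import structures.
From mathcomp Require Import all_boot all_order all_algebra.
From mathcomp Require Import reals.
Set Implicit Arguments. Unset Strict Implicit. Unset Printing Implicit Defensive.
Import Order.TTheory GRing.Theory Num.Theory.
Local Open Scope ring_scope.

Section LieDefs.
Variable R : realType.
Variable n : nat.

Definition bracket (mu : 'I_n -> 'I_n -> 'rV[R]_n) (x y : 'rV[R]_n) : 'rV[R]_n :=
  \sum_(i < n) \sum_(j < n) (x 0 i * y 0 j) *: mu i j.

Definition basis_vec (i : 'I_n) : 'rV[R]_n := delta_mx 0 i.

Definition is_derivation (mu : 'I_n -> 'I_n -> 'rV[R]_n) (D : 'M[R]_n) : Prop :=
  forall x y : 'rV[R]_n,
    bracket mu x y *m D = bracket mu (x *m D) y + bracket mu x (y *m D).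

Definition is_inner_product (S : 'M[R]_n) : Prop :=
  S^T = S /\ forall x : 'rV[R]_n, x != 0 -> 0 < (x *m S *m x^T) 0 0.

Definition ip (S : 'M[R]_n) (x y : 'rV[R]_n) : R := (x *m S *m y^T) 0 0.

(* Ricci form of the left-invariant metric defined by S on the nilpotent Lie
   group with Lie algebra (R^n, mu): for an S-orthonormal basis (X_i),
   ric(X,Y) = -1/2 sum_{i,j} <[X,X_i],X_j><[Y,X_i],X_j>
              +1/4 sum_{i,j} <[X_i,X_j],X><[X_i,X_j],Y>,
   written here in the standard basis with G = S^{-1}. *)
Definition ricci_form (mu : 'I_n -> 'I_n -> 'rV[R]_n) (S : 'M[R]_n)
    (x y : 'rV[R]_n) : R :=
  let G := invmx S in
  - (1/2) * (\sum_(a < n) \sum_(b < n)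
       G a b * ip S (bracket mu x (basis_vec a)) (bracket mu y (basis_vec b)))
  + (1/4) * (\sum_(a < n) \sum_(b < n) \sum_(c < n) \sum_(d < n)
       G a c * G b d * ip S (mu a b) x * ip S (mu c d) y).

(* Ricci operator: the S-self-adjoint endomorphism Ric with
   <x Ric, y>_S = ric(x,y), i.e. Ric = B S^{-1} with B the Gram matrix of ric. *)
Definition ricci_op (mu : 'I_n -> 'I_n -> 'rV[R]_n) (S : 'M[R]_n) : 'M[R]_n :=
  (\matrix_(a < n, b < n) ricci_form mu S (basis_vec a) (basis_vec b)) *m invmx S.

Definition is_nilsoliton (mu : 'I_n -> 'I_n -> 'rV[R]_n) (S : 'M[R]_n) : Prop :=
  exists (c : R) (D : 'M[R]_n), is_derivation mu D /\ ricci_op mu S = c%:M + D.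

Definition einstein_nilradical (mu : 'I_n -> 'I_n -> 'rV[R]_n) : Prop :=
  exists S : 'M[R]_n, is_inner_product S /\ is_nilsoliton mu S.

End LieDefs.

(* The 7-dimensional algebra; e_1..e_7 are indices 0..6. *)
Definition e7 (R : realType) (k : nat) : 'rV[R]_7 := delta_mx 0 (inord k).

Definition mu7 (R : realType) (i j : 'I_7) : 'rV[R]_7 :=
  match nat_of_ord i, nat_of_ord j with
  | 0, 1 => e7 R 3 | 1, 0 => - e7 R 3
  | 0, 2 => e7 R 4 | 2, 0 => - e7 R 4
  | 0, 3 => e7 R 5 | 3, 0 => - e7 R 5
  | 0, 5 => e7 R 6 | 5, 0 => - e7 R 6
  | 1, 2 => e7 R 5 | 2, 1 => - e7 R 5
  | 1, 4 => e7 R 6 | 4, 1 => - e7 R 6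
  | 2, 4 => e7 R 6 | 4, 2 => - e7 R 6
  | _, _ => 0
  end.

(* Main.v *)
Require Import Defs.
From HB Require Import structures.
From mathcomp Require Import all_boot all_order all_algebra.
From mathcomp Require Import reals.
From mathcomp Require Import ring lra.
Set Implicit Arguments. Unset Strict Implicit. Unset Printing Implicit Defensive.
Import Order.TTheory GRing.Theory Num.Theory.
Local Open Scope ring_scope.

(* Proof idea: if Ric = c I + D with D a derivation, then
   (i) tr(Ric d) = 0 for the diagonal derivation d = diag(1,2,2,3,3,4,5)
   (Lauret's identity), (ii) D is triangular with diagonal t*(1,2,2,3,3,4,5),
   (iii) for the orthogonal projection P onto the codimension-2 abelian ideal
   W = span(e2-e3,e4,...,e7), tr(Ric P) = |[X_a,X_b]|^2/2 > 0, while the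
   nilsoliton equation forces tr(Ric P) = 5c + 17t = (20c + 68t)/4 = 0. *)

Section Sums.
Variable R : realType.
Variable n : nat.
Implicit Types F : 'I_n -> 'I_n -> 'I_n -> R.

Lemma pull2 F : \sum_p \sum_q \sum_a F p q a = \sum_a \sum_p \sum_q F p q a.
Proof. under eq_bigr do rewrite exchange_big. by rewrite exchange_big. Qed.

Lemma rev4 (F : 'I_n -> 'I_n -> 'I_n -> 'I_n -> R) :
  \sum_p \sum_q \sum_a \sum_b F p q a b = \sum_b \sum_a \sum_q \sum_p F p q a b.
Proof.
under eq_bigr do rewrite pull2.
rewrite exchange_big. apply: eq_bigr => b _.
rewrite pull2; apply: eq_bigr => a _; by rewrite exchange_big.
Qed.
End Sums.

Notation J0 := (ord0 : 'I_2).
Notation J1 := (lift ord0 (ord0 : 'I_1) : 'I_2).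

Section Gen.
Variable R : realType.
Variable n : nat.
Variable mu : 'I_n -> 'I_n -> 'rV[R]_n.
Hypothesis mu_anti : forall i j, mu j i = - mu i j.
Variable S : 'M[R]_n.
Hypothesis Ssym : S^T = S.
Hypothesis Sunit : S \in unitmx.

Local Notation G := (invmx S).
Local Notation ip := (ip S).
Local Notation br := (bracket mu).

Lemma Gsym : G^T = G.
Proof. by rewrite trmx_inv Ssym. Qed.

Lemma GsymE a b : G a b = G b a.
Proof. by rewrite -{1}Gsym mxE. Qed.

Lemma SG : S *m G = 1%:M.
Proof. exact: mulmxV. Qed.

Lemma GS : G *m S = 1%:M.
Proof. exact: mulVmx. Qed.

Lemma ipDl x y z : ip (x + y) z = ip x z + ip y z.
Proof. by rewrite /Defs.ip !mulmxDl mxE. Qed.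
Lemma ipZl a x z : ip (a *: x) z = a * ip x z.
Proof. by rewrite /Defs.ip -!scalemxAl mxE. Qed.
Lemma ip0l z : ip 0 z = 0.
Proof. by rewrite /Defs.ip !mul0mx mxE. Qed.
Lemma ipNl x z : ip (- x) z = - ip x z.
Proof. by rewrite -scaleN1r ipZl mulN1r. Qed.
Lemma ipC x y : ip x y = ip y x.
Proof.
rewrite /Defs.ip.
have -> : x *m S *m y^T = (y *m S *m x^T)^T by rewrite !trmx_mul trmxK Ssym mulmxA.
by rewrite mxE.
Qed.
Lemma ipDr x y z : ip z (x + y) = ip z x + ip z y.
Proof. by rewrite !(ipC z) ipDl. Qed.
Lemma ipZr a x z : ip z (a *: x) = a * ip z x.
Proof. by rewrite !(ipC z) ipZl. Qed.
Lemma ip0r z : ip z 0 = 0.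
Proof. by rewrite ipC ip0l. Qed.
Lemma ipNr x z : ip z (- x) = - ip z x.
Proof. by rewrite !(ipC z) ipNl. Qed.
Lemma ip_suml (I : finType) (P : pred I) (F : I -> 'rV[R]_n) z :
  ip (\sum_(i | P i) F i) z = \sum_(i | P i) ip (F i) z.
Proof. by apply: (big_morph (fun x => ip x z)); [move=> x1 x2; exact: ipDl|exact: ip0l]. Qed.
Lemma ip_sumr (I : finType) (P : pred I) (F : I -> 'rV[R]_n) z :
  ip z (\sum_(i | P i) F i) = \sum_(i | P i) ip z (F i).
Proof. by rewrite ipC ip_suml; apply: eq_bigr => i _; rewrite ipC. Qed.

Lemma ip_basis x p : ip x (@basis_vec R n p) = (x *m S) 0 p.
Proof. by rewrite /Defs.ip /basis_vec trmx_delta -colE mxE. Qed.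

Lemma br_anti x y : br y x = - br x y.
Proof.
rewrite /bracket exchange_big -sumrN; apply: eq_bigr => i _.
rewrite -sumrN; apply: eq_bigr => j _; by rewrite mu_anti scalerN mulrC.
Qed.

Lemma br_self x : br x x = 0.
Proof.
have h : br x x + br x x = 0 by rewrite {1}br_anti addNr.
have : (2%:R : R) *: br x x = 0 by rewrite scaler_nat mulr2n.
by move/eqP; rewrite scaler_eq0 pnatr_eq0 /= => /eqP.
Qed.

Lemma br_basis p q : br (@basis_vec R n p) (@basis_vec R n q) = mu p q.
Proof.
rewrite /bracket (bigD1 p) //= (bigD1 q) //=.
rewrite big1; last by move=> j jq; rewrite !mxE (negbTE jq) andbF mulr0 scale0r.
rewrite big1; last first.
  by move=> i ip; rewrite big1 // => j _; rewrite !mxE (negbTE ip) andbF mul0r scale0r.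
by rewrite !mxE !eqxx mulr1 scale1r !addr0.
Qed.

Definition TT (X Y : 'M[R]_n) : R :=
  \sum_p \sum_q \sum_a \sum_b X q p * Y a b * ip (mu p a) (mu q b).

Definition Zs (A : 'M[R]_n) : R :=
  \sum_a \sum_b \sum_c \sum_d G a c * G b d * ip (mu c d *m A) (mu a b).

Definition Zf (f : 'I_n -> 'I_n -> R) : R :=
  \sum_a \sum_b \sum_c \sum_d G a c * G b d * f c d * ip (mu c d) (mu a b).

Lemma quad_entry (u v : 'rV[R]_n) (M : 'M[R]_n) :
  (u *m M *m v^T) 0 0 = \sum_p \sum_q u 0 q * M q p * v 0 p.
Proof.
rewrite mxE; apply: eq_bigr => p _; rewrite !mxE mulr_suml.
by apply: eq_bigr => q _.
Qed.

Lemma trace_ric A :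
  \tr (ricci_op mu S *m A) = -(1/2) * TT (G *m A) G + (1/4) * Zs A.
Proof.
rewrite /ricci_op -mulmxA /mxtrace.
under eq_bigr do rewrite mxE.
under eq_bigr do under eq_bigr do rewrite mxE /ricci_form mulrDl.
under eq_bigr do rewrite big_split /=.
rewrite big_split /=; congr (_ + _).
  rewrite /TT mulr_sumr; apply: eq_bigr => p _.
  rewrite mulr_sumr; apply: eq_bigr => q _.
  rewrite -mulrA; congr (_ * _); rewrite mulr_suml; apply: eq_bigr => a _.
  rewrite mulr_suml; apply: eq_bigr => b _; rewrite !br_basis; ring.
have -> : \sum_p \sum_q 1 / 4 * (\sum_a \sum_b \sum_c \sum_d
     G a c * G b d * ip (mu a b) (@basis_vec R n p) * ip (mu c d) (@basis_vec R n q)) *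
     (G *m A) q p =
   1/4 * \sum_p \sum_q \sum_a \sum_b \sum_c \sum_d
     (G a c * G b d * ((mu a b *m S) 0 p * (mu c d *m S) 0 q * (G *m A) q p)).
  rewrite mulr_sumr; apply: eq_bigr => p _; rewrite mulr_sumr; apply: eq_bigr => q _.
  rewrite -mulrA; congr (_ * _); rewrite mulr_suml; apply: eq_bigr => a _.
  rewrite mulr_suml; apply: eq_bigr => b _; rewrite mulr_suml; apply: eq_bigr => c _.
  rewrite mulr_suml; apply: eq_bigr => d _; rewrite !ip_basis; ring.
congr (_ * _); rewrite /Zs pull2; apply: eq_bigr => a _.
rewrite pull2; apply: eq_bigr => b _; rewrite pull2; apply: eq_bigr => c _.
rewrite pull2; apply: eq_bigr => d _.
under eq_bigr do rewrite -mulr_sumr. rewrite -mulr_sumr; congr (_ * _).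
rewrite /Defs.ip.
have -> : mu c d *m A *m S *m (mu a b)^T =
    (mu c d *m S) *m (G *m A) *m (mu a b *m S)^T.
  by rewrite trmx_mul Ssym !mulmxA -[mu c d *m S *m G]mulmxA SG mulmx1.
rewrite quad_entry; apply: eq_bigr => p _.
by apply: eq_bigr => q _; ring.
Qed.

Lemma Zs_Zf A f : (forall c d, mu c d *m A = f c d *: mu c d) -> Zs A = Zf f.
Proof.
move=> hA; rewrite /Zs /Zf; apply: eq_bigr => a _; apply: eq_bigr => b _.
apply: eq_bigr => c _; apply: eq_bigr => d _; by rewrite hA ipZl mulrA.
Qed.

Lemma Zf_swap f : Zf f = Zf (fun c d => f d c).
Proof.
rewrite /Zf [RHS]exchange_big; apply: eq_bigr => a _; apply: eq_bigr => b _.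
rewrite [RHS]exchange_big; apply: eq_bigr => c _; apply: eq_bigr => d _.
by rewrite (mu_anti c d) (mu_anti a b) ipNl ipNr opprK; ring.
Qed.

Lemma Zf0 : Zf (fun _ _ => 0) = 0.
Proof. by rewrite /Zf big1 // => a _; rewrite big1 // => b _; rewrite big1 // => c _; rewrite big1 // => d _; rewrite mulr0 mul0r. Qed.

Lemma Zf_add f g : Zf (fun c d => f c d + g c d) = Zf f + Zf g.
Proof.
rewrite /Zf -big_split; apply: eq_bigr => a _; rewrite -big_split; apply: eq_bigr => b _.
rewrite -big_split; apply: eq_bigr => c _; rewrite -big_split; apply: eq_bigr => d _ /=.
ring.
Qed.

Lemma TT_Zf (w : 'rV[R]_n) : TT (G *m diag_mx w) G = Zf (fun c _ => w 0 c).
Proof.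
rewrite /TT /Zf exchange_big; apply: eq_bigr => q _; rewrite pull2.
apply: eq_bigr => b _; apply: eq_bigr => p _; apply: eq_bigr => a _.
rewrite mul_mx_diag mxE (GsymE a b); ring.
Qed.

Lemma TT_Zf1 : TT G G = Zf (fun _ _ => 1).
Proof.
rewrite /TT /Zf exchange_big; apply: eq_bigr => q _; rewrite pull2.
apply: eq_bigr => b _; apply: eq_bigr => p _; apply: eq_bigr => a _.
rewrite (GsymE a b); ring.
Qed.

Lemma Zs1 : Zs 1%:M = TT G G.
Proof. by rewrite TT_Zf1; apply: Zs_Zf => c d; rewrite mulmx1 scale1r. Qed.

Lemma trace_ric_diag (w : 'rV[R]_n) :
  (forall c d, mu c d *m diag_mx w = (w 0 c + w 0 d) *: mu c d) ->
  \tr (ricci_op mu S *m diag_mx w) = 0.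
Proof.
move=> hw; rewrite trace_ric (Zs_Zf hw) Zf_add [Zf (fun c d => w 0 d)]Zf_swap /=.
by rewrite TT_Zf; field.
Qed.

Lemma trace_ric1 : \tr (ricci_op mu S) = -(1/4) * TT G G.
Proof. by rewrite -[ricci_op mu S]mulmx1 trace_ric mulmx1 Zs1; field. Qed.

Lemma TT_sym X Y : TT X Y = TT Y X.
Proof.
rewrite /TT [RHS]rev4; apply: eq_bigr => p _; apply: eq_bigr => q _.
apply: eq_bigr => a _; apply: eq_bigr => b _.
rewrite (mu_anti b q) (mu_anti a p) ipNl ipNr opprK ipC. by rewrite [X q p * _]mulrC.
Qed.

Lemma TTDl X Y Z : TT (X + Y) Z = TT X Z + TT Y Z.
Proof.
rewrite /TT -big_split; apply: eq_bigr => p _; rewrite -big_split; apply: eq_bigr => q _.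
rewrite -big_split; apply: eq_bigr => a _; rewrite -big_split; apply: eq_bigr => b _.
rewrite mxE /=; ring.
Qed.

Lemma TTZl c X Z : TT (c *: X) Z = c * TT X Z.
Proof.
rewrite /TT mulr_sumr; apply: eq_bigr => p _; rewrite mulr_sumr; apply: eq_bigr => q _.
rewrite mulr_sumr; apply: eq_bigr => a _; rewrite mulr_sumr; apply: eq_bigr => b _.
rewrite mxE; ring.
Qed.

Lemma TT0l Z : TT 0 Z = 0.
Proof. by rewrite -(scale0r 0) TTZl mul0r. Qed.

Lemma TTNl X Z : TT (- X) Z = - TT X Z.
Proof. by rewrite -scaleN1r TTZl mulN1r. Qed.

Lemma TTDr X Y Z : TT Z (X + Y) = TT Z X + TT Z Y.
Proof. by rewrite !(TT_sym Z) TTDl. Qed.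
Lemma TTZr c X Z : TT Z (c *: X) = c * TT Z X.
Proof. by rewrite !(TT_sym Z) TTZl. Qed.

Lemma TT_suml (I : finType) (F : I -> 'M[R]_n) Z :
  TT (\sum_i F i) Z = \sum_i TT (F i) Z.
Proof. by apply: (big_morph (fun X => TT X Z)); [move=> x1 x2; exact: TTDl|exact: TT0l]. Qed.
Lemma TT_sumr (I : finType) (F : I -> 'M[R]_n) Z :
  TT Z (\sum_i F i) = \sum_i TT Z (F i).
Proof. by rewrite TT_sym TT_suml; apply: eq_bigr => i _; rewrite TT_sym. Qed.

Lemma outerE (x y : 'rV[R]_n) q p : (x^T *m y) q p = x 0 q * y 0 p.
Proof. by rewrite mxE big_ord1 !mxE. Qed.

Lemma br_ip (x y z w : 'rV[R]_n) : ip (br x y) (br z w) =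
  \sum_i \sum_j \sum_k \sum_l x 0 i * y 0 j * (z 0 k * w 0 l) * ip (mu i j) (mu k l).
Proof.
rewrite /bracket.
rewrite ip_suml; apply: eq_bigr => i _; rewrite ip_suml; apply: eq_bigr => j _.
rewrite ipZl ip_sumr mulr_sumr; apply: eq_bigr => k _.
rewrite ip_sumr mulr_sumr; apply: eq_bigr => l _; rewrite ipZr; ring.
Qed.

Lemma TT_outer (x y z w : 'rV[R]_n) :
  TT (x^T *m y) (z^T *m w) = ip (br y z) (br x w).
Proof.
rewrite br_ip /TT; apply: eq_bigr => p _; rewrite exchange_big.
apply: eq_bigr => a _; apply: eq_bigr => q _; apply: eq_bigr => b _.
rewrite !outerE; ring.
Qed.

Lemma TT_W m (U : 'M[R]_(m, n)) X Y :
  (forall x y, x *m U^T = 0 -> y *m U^T = 0 -> br x y = 0) ->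
  X *m U^T = 0 -> U *m Y = 0 -> TT X Y = 0.
Proof.
move=> hab hX hY.
have -> : TT X Y = \sum_q \sum_b ip (br (row q X) (row b Y^T)) (mu q b).
  rewrite /TT exchange_big; apply: eq_bigr => q _; rewrite pull2.
  apply: eq_bigr => b _; rewrite /bracket ip_suml; apply: eq_bigr => p _.
  rewrite ip_suml; apply: eq_bigr => a _; rewrite ipZl !mxE; ring.
rewrite big1 // => q _; rewrite big1 // => b _; rewrite hab ?ip0l //.
  by rewrite -row_mul hX row0.
by rewrite -row_mul -trmx_mul hY trmx0 row0.
Qed.

Lemma VKV (V : 'M[R]_(2, n)) (K : 'M[R]_2) :
  V^T *m K *m V = \sum_i \sum_j K i j *: ((row i V)^T *m row j V).
Proof.
apply/matrixP => q p; rewrite mxE summxE.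
under [RHS]eq_bigr do rewrite summxE.
rewrite [RHS]exchange_big; apply: eq_bigr => j _.
rewrite mxE mulr_suml; apply: eq_bigr => i _.
by rewrite !mxE big_ord1 !mxE; ring.
Qed.

Lemma TT_quad (K : 'M[R]_2) (A : 'I_2 -> 'I_2 -> 'M[R]_n) :
  TT (\sum_i \sum_j K i j *: A i j) (\sum_k \sum_l K k l *: A k l) =
  \sum_i \sum_j \sum_k \sum_l K i j * K k l * TT (A i j) (A k l).
Proof.
rewrite TT_suml; apply: eq_bigr => i _; rewrite TT_suml; apply: eq_bigr => j _.
rewrite TTZl TT_sumr mulr_sumr; apply: eq_bigr => k _.
rewrite TT_sumr mulr_sumr; apply: eq_bigr => l _; rewrite TTZr; ring.
Qed.


Lemma TT_rank2 (V : 'M[R]_(2, n)) (K : 'M[R]_2) :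
  TT (V^T *m K *m V) (V^T *m K *m V) =
  (2 * K J0 J0 * K J1 J1 - K J0 J1 ^+ 2 - K J1 J0 ^+ 2) *
  ip (br (row J0 V) (row J1 V)) (br (row J0 V) (row J1 V)).
Proof.
rewrite VKV TT_quad.
under eq_bigr do under eq_bigr do under eq_bigr do under eq_bigr do rewrite TT_outer.
rewrite !big_ord_recl !big_ord0 !br_self !ip0l !ip0r.
rewrite (br_anti (row J0 V) (row J1 V)) !ipNl !ipNr.
ring.
Qed.

Lemma G_pd : (forall x, x != 0 -> 0 < ip x x) ->
  forall y : 'rV[R]_n, y != 0 -> 0 < (y *m G *m y^T) 0 0.
Proof.
move=> hpd y ny.
have nyG : y *m G != 0.
  apply: contraNneq ny => hy; by rewrite -[y]mulmx1 -GS mulmxA hy mul0mx.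
have := hpd _ nyG; rewrite /Defs.ip trmx_mul Gsym.
by rewrite -(mulmxA (y *m G)) (mulmxA S) SG mul1mx.
Qed.

End Gen.

Lemma S_unit_pd (R : realType) n (S : 'M[R]_n) :
  (forall x, x != 0 -> 0 < ip S x x) -> S \in unitmx.
Proof.
move=> hpd; rewrite unitmxE unitfE; apply/negP => /det0P [v nv vS].
by have := hpd v nv; rewrite /Defs.ip vS mul0mx mxE ltxx.
Qed.



Notation O0 := (ord0 : 'I_7).
Notation O1 := (lift ord0 (ord0 : 'I_6) : 'I_7).
Notation O2 := (lift ord0 (lift ord0 (ord0 : 'I_5)) : 'I_7).
Notation O3 := (lift ord0 (lift ord0 (lift ord0 (ord0 : 'I_4))) : 'I_7).
Notation O4 := (lift ord0 (lift ord0 (lift ord0 (lift ord0 (ord0 : 'I_3)))) : 'I_7).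
Notation O5 := (lift ord0 (lift ord0 (lift ord0 (lift ord0 (lift ord0 (ord0 : 'I_2))))) : 'I_7).
Notation O6 := (lift ord0 (lift ord0 (lift ord0 (lift ord0 (lift ord0 (lift ord0 (ord0 : 'I_1)))))) : 'I_7).

Ltac simp0 := rewrite ?(mulr0n, mulr1n, mul0r, mulr0, mul1r, mulr1, subr0, sub0r, addr0, add0r, oppr0, opprK).
Ltac simp0h h := rewrite ?(mulr0n, mulr1n, mul0r, mulr0, mul1r, mulr1, subr0, sub0r, addr0, add0r, oppr0, opprK) in h.

Section S7.
Variable R : realType.

Definition br7 (x y : 'rV[R]_7) (k : 'I_7) : R :=
  match nat_of_ord k with
  | 3 => x 0 O0 * y 0 O1 - x 0 O1 * y 0 O0
  | 4 => x 0 O0 * y 0 O2 - x 0 O2 * y 0 O0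
  | 5 => x 0 O0 * y 0 O3 - x 0 O3 * y 0 O0 + x 0 O1 * y 0 O2 - x 0 O2 * y 0 O1
  | 6 => x 0 O0 * y 0 O5 - x 0 O5 * y 0 O0 + x 0 O1 * y 0 O4 - x 0 O4 * y 0 O1
         + x 0 O2 * y 0 O4 - x 0 O4 * y 0 O2
  | _ => 0
  end.

Lemma mu7E (i j k : 'I_7) : (@mu7 R i j) 0 k =
  match nat_of_ord i, nat_of_ord j with
  | 0, 1 => (k == 3 :> nat)%:R | 1, 0 => - (k == 3 :> nat)%:R
  | 0, 2 => (k == 4 :> nat)%:R | 2, 0 => - (k == 4 :> nat)%:R
  | 0, 3 => (k == 5 :> nat)%:R | 3, 0 => - (k == 5 :> nat)%:R
  | 0, 5 => (k == 6 :> nat)%:R | 5, 0 => - (k == 6 :> nat)%:R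
  | 1, 2 => (k == 5 :> nat)%:R | 2, 1 => - (k == 5 :> nat)%:R
  | 1, 4 => (k == 6 :> nat)%:R | 4, 1 => - (k == 6 :> nat)%:R
  | 2, 4 => (k == 6 :> nat)%:R | 4, 2 => - (k == 6 :> nat)%:R
  | _, _ => 0
  end.
Proof.
rewrite /mu7 /e7.
case: i => [[|[|[|[|[|[|[|i]]]]]]] Hi] //=; case: j => [[|[|[|[|[|[|[|j]]]]]]] Hj] //=;
  by rewrite ?mxE /= -?val_eqE /= ?inordK.
Qed.

Lemma bracket7E x y : bracket (@mu7 R) x y = \row_k br7 x y k.
Proof.
apply/rowP => k; rewrite !mxE /bracket summxE.
under eq_bigr do rewrite summxE.
under eq_bigr do under eq_bigr do rewrite mxE mu7E.
rewrite !big_ord_recl !big_ord0 /=.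
case: k => [[|[|[|[|[|[|[|k]]]]]]] Hk] //=; rewrite /br7 /=; ring.
Qed.


Lemma derE (D : 'M[R]_7) : is_derivation (@mu7 R) D -> forall a b k : 'I_7,
  \sum_i br7 (delta_mx 0 a) (delta_mx 0 b) i * D i k =
  br7 (row a D) (delta_mx 0 b) k + br7 (delta_mx 0 a) (row b D) k.
Proof.
move=> hD a b k; have := congr1 (fun v : 'rV_7 => v 0 k) (hD (delta_mx 0 a) (delta_mx 0 b)).
rewrite /= -!rowE !bracket7E !mxE => <-.
by apply: eq_bigr => i _; rewrite mxE.
Qed.



Definition w7 (i : nat) : nat :=
  match i with 0 => 1 | 1 | 2 => 2 | 3 | 4 => 3 | 5 => 4 | _ => 5 end.
Definition dw : 'rV[R]_7 := \row_i (w7 i)%:R.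

Lemma mu7_anti (i j : 'I_7) : @mu7 R j i = - @mu7 R i j.
Proof.
case: i => [[|[|[|[|[|[|[|i]]]]]]] Hi] //=; case: j => [[|[|[|[|[|[|[|j]]]]]]] Hj] //=;
  by rewrite /mu7 /= ?opprK ?oppr0.
Qed.

Lemma mu7_diag (c d : 'I_7) :
  @mu7 R c d *m diag_mx dw = (dw 0 c + dw 0 d) *: @mu7 R c d.
Proof.
apply/rowP => k; rewrite mul_mx_diag !mxE !mu7E -natrD.
case: c => [[|[|[|[|[|[|[|c]]]]]]] Hc] //=; case: d => [[|[|[|[|[|[|[|d]]]]]]] Hd] //=;
  rewrite ?mul0r ?mulr0 //;
  case: k => [[|[|[|[|[|[|[|k]]]]]]] Hk] //=; by rewrite ?mulNr ?mulrN -!natrM.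
Qed.



Definition Um : 'M[R]_(2, 7) := \matrix_(i, j)
  (if nat_of_ord i == 0%N then (nat_of_ord j == 0%N)%:R
   else ((nat_of_ord j == 1%N) || (nat_of_ord j == 2%N))%:R).

Lemma xUm (x : 'rV[R]_7) : x *m Um^T = 0 -> x 0 O0 = 0 /\ x 0 O2 = - x 0 O1.
Proof.
move=> h; have h0 := congr1 (fun v : 'rV_2 => v 0 J0) h.
have h1 := congr1 (fun v : 'rV_2 => v 0 J1) h.
rewrite /= !mxE !big_ord_recl !big_ord0 /= !mxE /= in h0 h1.
simp0h h0; simp0h h1; split => //; lra.
Qed.

Lemma W_abel x y : x *m Um^T = 0 -> y *m Um^T = 0 -> bracket (@mu7 R) x y = 0.
Proof.
move=> /xUm [x0 x2] /xUm [y0 y2]; rewrite bracket7E; apply/rowP => k.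
rewrite !mxE /br7; case: k => [[|[|[|[|[|[|[|k]]]]]]] Hk] //=;
  rewrite ?x0 ?x2 ?y0 ?y2; ring.
Qed.

Lemma muUm c d : @mu7 R c d *m Um^T = 0.
Proof.
apply/matrixP => i j; rewrite [i]ord1 !mxE !big_ord_recl !big_ord0 !mxE !mu7E.
case: c => [[|[|[|[|[|[|[|c]]]]]]] Hc] //=; case: d => [[|[|[|[|[|[|[|d]]]]]]] Hd] //=;
  case: j => [[|[|j]] Hj] //=; by simp0.
Qed.

End S7.




Tactic Notation "dfac" constr(hD) constr(a) constr(b) constr(k) :=
  let h := fresh "f" in
  have h := derE hD a b k;
  rewrite !big_ord_recl !big_ord0 /br7 /= !mxE /= in h; simp0h h.

Section Main.
Variable R : realType.

Lemma Dfacts (D : 'M[R]_7) : is_derivation (@mu7 R) D ->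
  (D O1 O0 = 0 /\ D O2 O0 = 0 /\ D O3 O0 = 0 /\ D O4 O0 = 0 /\ D O5 O0 = 0 /\ D O6 O0 = 0) /\
  (D O3 O1 + D O3 O2 = 0 /\ D O4 O1 + D O4 O2 = 0 /\ D O5 O1 + D O5 O2 = 0 /\
      D O6 O1 + D O6 O2 = 0 /\ D O2 O1 + D O2 O2 = D O1 O1 + D O1 O2) /\
  (D O1 O2 = 0 /\ D O1 O1 = 2 * D O0 O0 /\ D O2 O2 = 2 * D O0 O0 /\
      D O3 O3 = 3 * D O0 O0 /\ D O4 O4 = 3 * D O0 O0 /\ D O6 O6 = 5 * D O0 O0).
Proof.
move=> hD.
dfac hD O0 O1 O0. dfac hD O0 O2 O0. dfac hD O0 O3 O0. dfac hD O0 O5 O0.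
dfac hD O1 O2 O4. dfac hD O0 O3 O4. dfac hD O0 O1 O2.
dfac hD O1 O2 O3. dfac hD O0 O3 O3. dfac hD O0 O1 O1.
dfac hD O0 O2 O1. dfac hD O0 O2 O2. dfac hD O0 O3 O1. dfac hD O0 O3 O2.
dfac hD O0 O5 O1. dfac hD O0 O5 O2.
dfac hD O0 O2 O3. dfac hD O0 O4 O5. dfac hD O0 O1 O4. dfac hD O1 O3 O6.
dfac hD O1 O4 O6. dfac hD O2 O4 O6.
dfac hD O0 O1 O3. dfac hD O0 O2 O4. dfac hD O0 O3 O5. dfac hD O0 O5 O6. dfac hD O1 O2 O5.
repeat split; lra.
Qed.

End Main.




Section Main2.
Variable R : realType.

Lemma ord2 (i : 'I_2) : i = J0 \/ i = J1.
Proof. case: i => [[|[|i]] Hi]; [left|right|by []]; exact/val_inj. Qed.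

Lemma ord7 (i : 'I_7) :
  i = O0 \/ i = O1 \/ i = O2 \/ i = O3 \/ i = O4 \/ i = O5 \/ i = O6.
Proof.
case: i => [[|[|[|[|[|[|[|i]]]]]]] Hi] //.
- by left; apply/val_inj.
- by right; left; apply/val_inj.
- by do 2 right; left; apply/val_inj.
- by do 3 right; left; apply/val_inj.
- by do 4 right; left; apply/val_inj.
- by do 5 right; left; apply/val_inj.
- by do 6 right; apply/val_inj.
Qed.

Definition zrow (a b : R) : 'rV[R]_2 := \row_j (if nat_of_ord j == 0%N then a else b).

Lemma quad2 (a b : R) (M : 'M[R]_2) :
  (zrow a b *m M *m (zrow a b)^T) 0 0 =
  a * a * M J0 J0 + a * b * (M J0 J1 + M J1 J0) + b * b * M J1 J1.
Proof. rewrite !mxE !big_ord_recl !big_ord0 !mxE !big_ord_recl !big_ord0 !mxE /=; ring. Qed.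

Lemma zUm (a b : R) : (a != 0) || (b != 0) -> zrow a b *m Um R != 0.
Proof.
move=> hab; apply/eqP => h.
have h0 := congr1 (fun v : 'rV_7 => v 0 O0) h.
have h1 := congr1 (fun v : 'rV_7 => v 0 O1) h.
rewrite /= !mxE !big_ord_recl !big_ord0 !mxE /= in h0 h1; simp0h h0; simp0h h1.
by move: hab; rewrite h0 h1 eqxx.
Qed.

Lemma main7 : ~ einstein_nilradical (@mu7 R).
Proof.
move=> [S [[Ssym Spd] [c [D [hD hR]]]]].
have Sunit : S \in unitmx by apply: S_unit_pd.
have [[d10 [d20 [d30 [d40 [d50 d60]]]]] [[e3 [e4 [e5 [e6 e2]]]] [g12 [g11 [g22 [g33 [g44 g66]]]]]]] := Dfacts hD.
have T1 := trace_ric_diag (@mu7_anti R) Ssym Sunit (@mu7_diag R).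
rewrite hR mulmxDl mxtraceD mul_scalar_mx mxtraceZ mul_mx_diag /mxtrace in T1.
rewrite !big_ord_recl !big_ord0 !mxE /= in T1. simp0h T1.
have T0 := trace_ric1 (@mu7 R) Ssym Sunit.
rewrite hR mxtraceD mxtrace_scalar /mxtrace !big_ord_recl !big_ord0 /= in T0.
set G := invmx S in T0 *.
have GsymE : G^T = G by apply: Gsym.
set V := Um R *m G.
set H := V *m (Um R)^T.
have VE0 j : V J0 j = G O0 j.
  by rewrite /V !mxE !big_ord_recl !big_ord0 !mxE /=; simp0.
have VE1 j : V J1 j = G O1 j + G O2 j.
  by rewrite /V !mxE !big_ord_recl !big_ord0 !mxE /=; simp0.
have HE00 : H J0 J0 = G O0 O0.
  by rewrite /H /V !mxE !big_ord_recl !big_ord0 !mxE ?big_ord_recl ?big_ord0 ?mxE /=; simp0.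
have HE01 : H J0 J1 = G O0 O1 + G O0 O2.
  by rewrite /H /V !mxE !big_ord_recl !big_ord0 !mxE ?big_ord_recl ?big_ord0 ?mxE /=; simp0.
have HE10 : H J1 J0 = G O1 O0 + G O2 O0.
  by rewrite /H /V !mxE !big_ord_recl !big_ord0 !mxE ?big_ord_recl ?big_ord0 ?mxE /=; simp0.
have HE11 : H J1 J1 = G O1 O1 + G O1 O2 + (G O2 O1 + G O2 O2).
  rewrite /H /V !mxE !big_ord_recl !big_ord0 !mxE ?big_ord_recl ?big_ord0 ?mxE /=; simp0; ring.
have HT : H^T = H by rewrite /H /V !trmx_mul trmxK GsymE mulmxA.
have H10 : H J1 J0 = H J0 J1 by rewrite -{1}HT mxE.
have hH : H = V *m (Um R)^T by [].
have hV : V = Um R *m G by [].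
clearbody H. clearbody V.
have Gpd := G_pd Ssym Sunit Spd.
have Hpd a b : (a != 0) || (b != 0) ->
    0 < a * a * H J0 J0 + a * b * (H J0 J1 + H J1 J0) + b * b * H J1 J1.
  move=> hab; rewrite -quad2 hH hV !mulmxA -!mulmxA -trmx_mul mulmxA.
  by rewrite mulmxA; exact: Gpd (zUm hab).
have h00 : 0 < H J0 J0.
  by have := Hpd 1 0; rewrite oner_eq0 /=; simp0 => /(_ isT).
set dl := H J0 J0 * H J1 J1 - H J0 J1 * H J1 J0.
have hdl : 0 < dl.
  have := Hpd (- H J0 J1) (H J0 J0); rewrite (gt_eqF h00) orbT => /(_ isT) h.
  have : 0 < H J0 J0 * dl by rewrite /dl H10; rewrite H10 in h; nra.
  by rewrite pmulr_rgt0.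
have dl0 : dl != 0 by rewrite gt_eqF.
pose K : 'M[R]_2 := \matrix_(i, j) (dl^-1 *
   (if nat_of_ord i == 0%N then (if nat_of_ord j == 0%N then H J1 J1 else - H J0 J1)
    else (if nat_of_ord j == 0%N then - H J1 J0 else H J0 J0))).
have KH : K *m H = 1%:M.
  apply/matrixP => i j; rewrite /K !mxE !big_ord_recl !big_ord0 !mxE /=.
  case: (ord2 i) => ->; case: (ord2 j) => -> /=; simp0; rewrite /dl; field; exact: dl0.
have HK : H *m K = 1%:M.
  apply/matrixP => i j; rewrite /K !mxE !big_ord_recl !big_ord0 !mxE /=.
  case: (ord2 i) => ->; case: (ord2 j) => -> /=; simp0; rewrite /dl; field; exact: dl0.
have K00 : K J0 J0 = dl^-1 * H J1 J1 by rewrite /K mxE.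
have K01 : K J0 J1 = dl^-1 * - H J0 J1 by rewrite /K mxE.
have K10 : K J1 J0 = dl^-1 * - H J1 J0 by rewrite /K mxE.
have K11 : K J1 J1 = dl^-1 * H J0 J0 by rewrite /K mxE.
clearbody K.
pose Q := (Um R)^T *m K *m V.
have T2 := trace_ric (@mu7 R) Ssym Sunit Q.
rewrite (@Zs_Zf _ _ _ S Q (fun _ _ => 0)) ?Zf0 in T2; last first.
  by move=> c0 d0; rewrite scale0r /Q !mulmxA muUm !mul0mx.
have VT : V^T = G *m (Um R)^T by rewrite hV trmx_mul GsymE.
have GQ : G *m Q = V^T *m K *m V by rewrite /Q VT !mulmxA.
rewrite GQ hR in T2.
pose Gp := V^T *m K *m V. pose GW := G - Gp.
have eG : G = GW + Gp by rewrite /GW subrK.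
have hGp1 : Gp *m (Um R)^T = V^T by rewrite /Gp -!mulmxA -hH KH mulmx1.
have hGp2 : Um R *m Gp = V.
  by rewrite /Gp VT !mulmxA -hV -hH HK mul1mx.
have hGW1 : GW *m (Um R)^T = 0 by rewrite /GW mulmxBl hGp1 -VT subrr.
have hGW2 : Um R *m GW = 0 by rewrite /GW mulmxBr hGp2 -hV subrr.
have TW := TT_W S (@W_abel R) hGW1 hGW2.
have Tp := TT_rank2 (@mu7_anti R) Ssym V K.
have eGp : V^T *m K *m V = Gp by [].
rewrite eGp in T2 Tp.
clearbody GW Gp.
have TTGG : TT (@mu7 R) S G G =
    TT (@mu7 R) S GW GW + 2 * TT (@mu7 R) S Gp GW + TT (@mu7 R) S Gp Gp.
  rewrite [in LHS]eG !TTDl !(TTDr (@mu7_anti R) Ssym) (TT_sym (@mu7_anti R) Ssym GW Gp); ring.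
have TTpG : TT (@mu7 R) S Gp G = TT (@mu7 R) S Gp GW + TT (@mu7 R) S Gp Gp.
  by rewrite [in LHS]eG (TTDr (@mu7_anti R) Ssym).
rewrite TTpG in T2; rewrite TTGG TW in T0.
have trQ : \tr Q = 2.
  by rewrite /Q -mulmxA mxtrace_mulC -mulmxA -hH KH mxtrace1.
pose E : 'M[R]_2 := \matrix_(i, j)
  (if nat_of_ord i == 0%N then (if nat_of_ord j == 0%N then D O0 O0 else D O0 O1 + D O0 O2)
   else (if nat_of_ord j == 0%N then 0 else D O1 O1 + D O1 O2)).
have DUm : D *m (Um R)^T = (Um R)^T *m E.
  clear -d10 d20 d30 d40 d50 d60 e3 e4 e5 e6 e2.
  apply/matrixP => i j; rewrite /E !mxE !big_ord_recl !big_ord0 !mxE /=.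
  case: (ord2 j) => -> /=;
  case: (ord7 i) => [->|[->|[->|[->|[->|[->|->]]]]]] /=; simp0; lra.
have trDQ : \tr (D *m Q) = D O0 O0 + (D O1 O1 + D O1 O2).
  rewrite /Q !mulmxA DUm -!mulmxA mxtrace_mulC -!mulmxA -hH KH mulmx1.
  by rewrite /mxtrace !big_ord_recl !big_ord0 /E !mxE /= addr0.
rewrite mulmxDl mxtraceD mul_scalar_mx mxtraceZ trQ trDQ in T2.
set nu := bracket (@mu7 R) (row J0 V) (row J1 V) in Tp.
have hnu : nu 0 O3 + nu 0 O4 = dl.
  rewrite /nu bracket7E !mxE /br7 /= !mxE !VE0 !VE1 /dl HE00 HE01 HE10 HE11; ring.
have nu0 : nu != 0.
  by apply/eqP => h; move: hdl; rewrite -hnu h !mxE addr0 ltxx.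
have ipnu : 0 < ip S nu nu by apply: Spd.
have Kc : 2 * K J0 J0 * K J1 J1 - K J0 J1 ^+ 2 - K J1 J0 ^+ 2 = 2 / dl.
  rewrite K00 K01 K10 K11 H10 /dl H10; field; by move: dl0; rewrite /dl H10.
rewrite Kc in Tp.
have Ypos : 0 < TT (@mu7 R) S Gp Gp.
  by rewrite Tp; apply: mulr_gt0 => //; apply: divr_gt0.
rewrite -mulr_natr in T0.
clear -T0 T1 T2 Ypos g12 g11 g22 g33 g44 g66.
lra.
Qed.
End Main2.


Theorem mainTheorem2 (R : realType) : ~ einstein_nilradical (@mu7 R).
Proof. exact: main7. Qed.
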